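(* The assignment $c\mapsto[\![c]\!]_{op}$ is a morphism of props $\mathsf{ACirc}\to\mathsf{Traj}$; that is, for all circuits $c,d$: $[\![c;d]\!]_{op}=[\![c]\!]_{op};[\![d]\!]_{op}$ whenever $c;d$ is defined, $[\![c\oplus d]\!]_{op}=[\![c]\!]_{op}\oplus[\![d]\!]_{op}$, and identities and symmetries are sent to the identities and symmetries of $\mathsf{Traj}$.
   Context: Fix a field $k$. Circuits are terms built from generators, each with a sort $(n,m)$: copier $\Delta:(1,2)$, discard $!:(1,0)$, amplifier $\mathsf{s}_r:(1,1)$ ($r\in k$), register $\mathsf{x}:(1,1)$, adder $+:(2,1)$, zero $0:(0,1)$, one $\mathbf{1}:(0,1)$; mirror images $\Delta^{op}:(2,1)$, $!^{op}:(0,1)$, $\mathsf{s}_r^{op}:(1,1)$, $\mathsf{x}^{op}:(1,1)$, $+^{op}:(1,2)$, $0^{op}:(1,0)$, $\mathbf{1}^{op}:(1,0)$; $\mathrm{id}_0:(0,0)$, $\mathrm{id}_1:(1,1)$, $\mathrm{sw}:(2,2)$; closed under sequential composition $c;d$ (matching middle sort) and parallel composition $c\oplus d$ (sorts add). Modulo symmetric monoidal category laws they form the prop $\mathsf{ACirc}$. Operational semantics: a state is a circuit with a value of $k$ in each register ($\mathsf x$, $\mathsf x^{op}$); the initial state $c_0$ stores $0$ everywhere. Transitions $t\vdash c\xrightarrow[w]{v}c'$ (time $t\in\mathbb Z$, left label $v\in k^n$, right label $w\in k^m$) are generated by, for all $t$ and $a,b\in k$: $\Delta$: left $a$, right $(a,a)$;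 $!$: left $a$, right $\bullet$; $+$: left $(a,b)$, right $a+b$; $0$: left $\bullet$, right $0$; $\mathsf s_r$: left $a$, right $ra$; $\mathsf x$ storing $b$: left $a$, right $b$, then stores $a$; $\mathbf 1$: left $\bullet$, right $1$ if $t=0$, $0$ if $t\neq0$; mirrored generators: same rules with left/right labels exchanged; $\mathrm{id}_1$: $a/a$; $\mathrm{sw}$: $(a,b)/(b,a)$; $\mathrm{id}_0$: $\bullet/\bullet$; for $;$ the components synchronise at the same time on the shared middle label, for $\oplus$ they move at the same time with labels concatenated. A computation starting at time $t\le0$ is a sequence of transitions $t\vdash c_0\xrightarrow[v_t]{u_t}c_1$, $t+1\vdash c_1\xrightarrow[v_{t+1}]{u_{t+1}}c_2,\dots$ from the initial state. An $(n,m)$-trajectory is a map $\sigma:\mathbb Z\to k^n\times k^m$ with some $j$ such that $\sigma(i)=(0,0)$ for all $i\le j$; write $\sigma=\langle\sigma_l,\sigma_r\rangle$. For sets $S$ of $(k',m)$-trajectories and $T$ of $(m,n)$-trajectories, $S;T=\{\langle\sigma_l,\tau_r\rangle:\sigma\in S,\tau\in T,\sigma_r=\tau_l\}$; $S_1\oplus S_2=\{\sigma_1\oplus\sigma_2\}$ with $(\sigma_1\oplus\sigma_2)(i)$ the componentwise stacking of $\sigma_1(i)$ and $\sigma_2(i)$. These form a prop $\mathsf{Traj}$ whose arrows $n\to m$ are sets of $(n,m)$-trajectories. $[\![c]\!]_{op}$ is the set of trajectories $\sigma$ associated to infinite computations of $c$: $\sigma(i)=(u_i,v_i)$ for $i\ge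 t$ and $(0,0)$ for $i<t$, where $t$ is the starting time. *)

(* Defs.v *)
From HB Require Import structures.
From mathcomp Require Import all_boot all_order all_algebra.
Set Implicit Arguments. Unset Strict Implicit. Unset Printing Implicit Defensive.
Import Order.TTheory GRing.Theory Num.Theory.
Local Open Scope ring_scope.

Section ACirc.
Variable F : fieldType.

(* Circuit terms of sort (n,m).  Registers carry their stored value, so the
   same type also represents operational states. *)
Inductive circ : nat -> nat -> Type :=
| Copy : circ 1 2
| Discard : circ 1 0
| Amp : F -> circ 1 1
| Reg : F -> circ 1 1
| Add : circ 2 1
| Zero : circ 0 1
| One : circ 0 1
| CopyOp : circ 2 1
| DiscardOp : circ 0 1
| AmpOp : F -> circ 1 1
| RegOp : F -> circ 1 1
| AddOp : circ 1 2
| ZeroOp : circ 1 0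
| OneOp : circ 1 0
| Id0 : circ 0 0
| Id1 : circ 1 1
| Sw : circ 2 2
| Seq : forall n m l, circ n m -> circ m l -> circ n l
| Par : forall n1 m1 n2 m2, circ n1 m1 -> circ n2 m2 -> circ (n1 + n2) (m1 + m2).

Fixpoint reset n m (c : circ n m) : circ n m :=
  match c in circ n m return circ n m with
  | Reg _ => Reg 0
  | RegOp _ => RegOp 0
  | Seq _ _ _ c d => Seq (reset c) (reset d)
  | Par _ _ _ _ c d => Par (reset c) (reset d)
  | c => c
  end.

Fixpoint cid n : circ n n :=
  match n with
  | 0 => Id0
  | n'.+1 => Par Id1 (cid n')
  end.

Definition v1 (a : F) : 'rV[F]_1 := const_mx a.
Definition v2 (a b : F) : 'rV[F]_2 :=
  \row_(i < 2) (if (i : nat) == 0%N then a else b).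
Definition vnil : 'rV[F]_0 := 0.

Inductive step : forall n m, int -> circ n m -> 'rV[F]_n -> 'rV[F]_m -> circ n m -> Prop :=
| stCopy t a : step t Copy (v1 a) (v2 a a) Copy
| stDiscard t a : step t Discard (v1 a) vnil Discard
| stAmp t r a : step t (Amp r) (v1 a) (v1 (r * a)) (Amp r)
| stReg t b a : step t (Reg b) (v1 a) (v1 b) (Reg a)
| stAdd t a b : step t Add (v2 a b) (v1 (a + b)) Add
| stZero t : step t Zero vnil (v1 0) Zero
| stOne t : step t One vnil (v1 (if t == 0 then 1 else 0)) One
| stCopyOp t a : step t CopyOp (v2 a a) (v1 a) CopyOp
| stDiscardOp t a : step t DiscardOp vnil (v1 a) DiscardOp
| stAmpOp t r a : step t (AmpOp r) (v1 (r * a)) (v1 a) (AmpOp r)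
| stRegOp t b a : step t (RegOp b) (v1 b) (v1 a) (RegOp a)
| stAddOp t a b : step t AddOp (v1 (a + b)) (v2 a b) AddOp
| stZeroOp t : step t ZeroOp (v1 0) vnil ZeroOp
| stOneOp t : step t OneOp (v1 (if t == 0 then 1 else 0)) vnil OneOp
| stId0 t : step t Id0 vnil vnil Id0
| stId1 t a : step t Id1 (v1 a) (v1 a) Id1
| stSw t a b : step t Sw (v2 a b) (v2 b a) Sw
| stSeq t n m l (c c' : circ n m) (d d' : circ m l) u v w :
    step t c u v c' -> step t d v w d' -> step t (Seq c d) u w (Seq c' d')
| stPar t n1 m1 n2 m2 (c c' : circ n1 m1) (d d' : circ n2 m2) u1 w1 u2 w2 :
    step t c u1 w1 c' -> step t d u2 w2 d' ->
    step t (Par c d) (row_mx u1 u2) (row_mx w1 w2) (Par c' d').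

Definition trajfun n m := int -> 'rV[F]_n * 'rV[F]_m.
Definition is_traj n m (s : trajfun n m) : Prop :=
  exists j : int, forall i : int, i <= j -> s i = (0, 0).

Definition trajset n m := trajfun n m -> Prop.

Definition tseq k m n (S : trajset k m) (T : trajset m n) : trajset k n :=
  fun r => exists (s : trajfun k m) (t : trajfun m n),
    S s /\ T t /\ (forall i, (s i).2 = (t i).1) /\
    (forall i, r i = ((s i).1, (t i).2)).

Definition tpar n1 m1 n2 m2 (S1 : trajset n1 m1) (S2 : trajset n2 m2)
  : trajset (n1 + n2) (m1 + m2) :=
  fun r => exists (s1 : trajfun n1 m1) (s2 : trajfun n2 m2),
    S1 s1 /\ S2 s2 /\
    (forall i, r i = (row_mx (s1 i).1 (s2 i).1, row_mx (s1 i).2 (s2 i).2)).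

Definition tid n : trajset n n :=
  fun s => is_traj s /\ forall i, (s i).1 = (s i).2.

Definition tsym n m : trajset (n + m) (m + n) :=
  fun s => is_traj s /\
    forall i, (s i).2 = row_mx (rsubmx (s i).1) (lsubmx (s i).1).

Definition opsem n m (c : circ n m) : trajset n m :=
  fun sg => exists (t : int) (st : nat -> circ n m)
                   (u : nat -> 'rV[F]_n) (w : nat -> 'rV[F]_m),
    t <= 0 /\ st 0%N = reset c /\
    (forall i : nat, step (t + i%:Z) (st i) (u i) (w i) (st i.+1)) /\
    (forall j : int, sg j = if t <= j then (u `|j - t|%N, w `|j - t|%N)
                            else (0, 0)).

End ACirc.

(* Main.v *)
Require Import Defs.
From HB Require Import structures.
From mathcomp Require Import all_boot all_order all_algebra.
From mathcomp Require Import zify.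
From Stdlib Require Import Program.Equality ClassicalEpsilon FunctionalExtensionality PropExtensionality.
Import Order.TTheory GRing.Theory Num.Theory.
Local Open Scope ring_scope.
Set Implicit Arguments. Unset Strict Implicit.

Section Proof.
Variable F : fieldType.

Lemma v10 : v1 (0 : F) = 0.
Proof. by apply/rowP => i; rewrite !mxE. Qed.
Lemma v200 : v2 (0 : F) 0 = 0.
Proof. by apply/rowP => i; rewrite !mxE; case: ifP. Qed.
Lemma v2E (a b : F) : v2 a b = row_mx (v1 a) (v1 b) :> 'rV[F]_(1+1).
Proof. apply/rowP => k; rewrite !mxE; case: splitP => j hj; rewrite !mxE hj ?ord1 //. Qed.
Lemma rv1 (x : 'rV[F]_1) : x = v1 (x 0 0).
Proof. by apply/rowP => k; rewrite !mxE ord1. Qed.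
Lemma rv0 (x : 'rV[F]_0) : x = vnil F.
Proof. exact: thinmx0. Qed.
Lemma lsub0 a b c : lsubmx (0 : 'M[F]_(a, b + c)) = 0.
Proof. by rewrite -[X in lsubmx X]row_mx0 row_mxKl. Qed.
Lemma rsub0 a b c : rsubmx (0 : 'M[F]_(a, b + c)) = 0.
Proof. by rewrite -[X in rsubmx X]row_mx0 row_mxKr. Qed.

Lemma absS (x : int) : 0 <= x -> absz (x + 1) = (absz x).+1.
Proof. case: x => // k _. by rewrite /= addn1. Qed.

Lemma absK (t j : int) : t <= j -> t + (`|j - t|%N)%:Z = j.
Proof. move=> h. rewrite gez0_abs ?subr_ge0 //. lia. Qed.

Lemma seqinv t n m l (c: circ F n m) (d: circ F m l) u w C' :
  step t (Seq c d) u w C' ->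
  exists c' d' v, C' = Seq c' d' /\ step t c u v c' /\ step t d v w d'.
Proof. intro H. dependent destruction H. by exists c', d', v. Qed.

Lemma seqinj n m l (c c': circ F n m) (d d': circ F m l) :
  Seq c d = Seq c' d' -> c = c' /\ d = d'.
Proof. intro H. dependent destruction H. auto. Qed.

Lemma parinj n1 m1 n2 m2 (c c': circ F n1 m1) (d d': circ F n2 m2) :
  Par c d = Par c' d' -> c = c' /\ d = d'.
Proof. intro H. dependent destruction H. auto. Qed.

Definition parinvP t n m (C : circ F n m) : 'rV[F]_n -> 'rV[F]_m -> circ F n m -> Prop :=
  match C in circ _ n m return 'rV[F]_n -> 'rV[F]_m -> circ F n m -> Prop with
  | @Par _ n1 m1 n2 m2 c d => fun u w C' => exists c' d' u1 u2 w1 w2,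
       C' = Par c' d' /\ u = row_mx u1 u2 /\ w = row_mx w1 w2 /\
       step t c u1 w1 c' /\ step t d u2 w2 d'
  | _ => fun _ _ _ => True
  end.
Arguments parinvP t {n m}.

Lemma parinv t n m (C : circ F n m) u w C' : step t C u w C' -> parinvP t C u w C'.
Proof.
case => //= t' n1 m1 n2 m2 c c' d d' u1 w1 u2 w2 h1 h2.
by exists c', d', u1, u2, w1, w2.
Qed.

Definition simpP n m (C : circ F n m) : 'rV[F]_n -> 'rV[F]_m -> circ F n m -> Prop :=
  match C in circ _ n m return 'rV[F]_n -> 'rV[F]_m -> circ F n m -> Prop with
  | Id1 => fun u w C' => u = w /\ C' = Id1 F
  | Id0 => fun u w C' => C' = Id0 F
  | Sw => fun u w C' => (exists a b, u = v2 a b /\ w = v2 b a) /\ C' = Sw F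
  | _ => fun _ _ _ => True
  end.
Arguments simpP {n m}.

Lemma simpinv t n m (C : circ F n m) u w C' : step t C u w C' -> simpP C u w C'.
Proof. case => //= *; split => //. by do 2 eexists. Qed.

Definition iruns {n m} (t : int) (C : circ F n m) (sg : trajfun F n m) :=
  exists st : int -> circ F n m, st t = C /\
    forall j, t <= j -> step j (st j) (sg j).1 (sg j).2 (st (j + 1)).
Definition zb {n m} (t : int) (sg : trajfun F n m) := forall j, j < t -> sg j = (0, 0).

Lemma opsemE n m (c : circ F n m) sg :
  opsem c sg <-> exists t, t <= 0 /\ zb t sg /\ iruns t (reset c) sg.
Proof.
split.
- case=> t [st [u [w [t0 [s0 [hs hsg]]]]]]. exists t; split=>//; split.
  + move=> j hj; rewrite hsg.
    have -> : (t <= j) = false by lia.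
    by [].
  + exists (fun j => st `|j - t|%N). split; first by rewrite subrr.
    move=> j hj. rewrite hsg hj /=.
    have -> : (j + 1 - t) = (j - t) + 1 by rewrite addrAC.
    rewrite absS ?subr_ge0 //.
    have := hs `|j - t|%N.
    by rewrite absK.
- case=> t [t0 [hz [st [s0 hs]]]].
  exists t, (fun i : nat => st (t + i%:Z)), (fun i : nat => (sg (t + i%:Z)).1),
    (fun i : nat => (sg (t + i%:Z)).2).
  split=>//. split; first by rewrite addr0.
  split.
  + move=> i. have -> : t + (i.+1)%:Z = t + i%:Z + 1 by lia.
    exact: hs (t + i%:Z) ltac:(lia).
  + move=> j. case: ifP => h.
    * rewrite absK //. by case: (sg j).
    * apply: hz. lia.
Qed.

Lemma zero_step n m (c : circ F n m) j : j != 0 -> step j (reset c) 0 0 (reset c).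
Proof.
move=> hj; elim: c => /=.
- rewrite -v10 -v200; exact: stCopy.
- rewrite -v10; exact: stDiscard.
- move=> r; rewrite -v10. have := stAmp j r (0:F). by rewrite mulr0.
- move=> r; rewrite -v10; exact: stReg.
- rewrite -v10 -v200. have := stAdd j (0:F) 0. by rewrite addr0.
- rewrite -v10; exact: stZero.
- have := stOne F j. by rewrite (negbTE hj) v10.
- rewrite -v10 -v200; exact: stCopyOp.
- rewrite -v10; exact: stDiscardOp.
- move=> r; rewrite -v10. have := stAmpOp j r (0:F). by rewrite mulr0.
- move=> r; rewrite -v10; exact: stRegOp.
- rewrite -v10 -v200. have := stAddOp j (0:F) 0. by rewrite addr0.
- rewrite -v10; exact: stZeroOp.
- have := stOneOp F j. by rewrite (negbTE hj) v10.
- exact: stId0.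
- rewrite -v10; exact: stId1.
- rewrite -v200; exact: stSw.
- move=> n0 m0 l c IHc d IHd. exact: stSeq IHc IHd.
- move=> n1 m1 n2 m2 c IHc d IHd. have := stPar IHc IHd. by rewrite !row_mx0.
Qed.

Lemma extend n m (c : circ F n m) t t' sg :
  t' <= t -> t <= 0 -> zb t sg -> iruns t (reset c) sg -> iruns t' (reset c) sg.
Proof.
move=> h1 h2 hz [st [s0 hs]].
exists (fun j => if j < t then reset c else st j). split.
  case: ifP => // h. have -> : t' = t by lia. by [].
move=> j hj. case: (boolP (j < t)) => hjt.
- rewrite (hz _ hjt) /=. case: ifP => h.
  + apply: zero_step. lia.
  + have -> : j + 1 = t by lia. rewrite s0. apply: zero_step. lia.
- have -> : (j + 1 < t) = false by lia.
  apply: hs. lia.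
Qed.

Lemma iruns_ext n m t (C : circ F n m) sg sg' :
  (forall j, t <= j -> sg j = sg' j) -> iruns t C sg -> iruns t C sg'.
Proof.
move=> e [st [s0 hs]]. exists st; split => // j hj. rewrite -e //. exact: hs.
Qed.

Lemma iruns_seq_intro n m l t (c : circ F n m) (d : circ F m l) s r :
  iruns t c s -> iruns t d r -> (forall j, (s j).2 = (r j).1) ->
  iruns t (Seq c d) (fun j => ((s j).1, (r j).2)).
Proof.
move=> [st1 [e1 h1]] [st2 [e2 h2]] e.
exists (fun j => Seq (st1 j) (st2 j)). split; first by rewrite e1 e2.
move=> j hj /=. apply: stSeq; first exact: h1. rewrite e; exact: h2.
Qed.

Lemma iruns_par_intro n1 m1 n2 m2 t (c : circ F n1 m1) (d : circ F n2 m2) s r :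
  iruns t c s -> iruns t d r ->
  iruns t (Par c d) (fun j => (row_mx (s j).1 (r j).1, row_mx (s j).2 (r j).2)).
Proof.
move=> [st1 [e1 h1]] [st2 [e2 h2]].
exists (fun j => Par (st1 j) (st2 j)). split; first by rewrite e1 e2.
move=> j hj /=. apply: stPar; [exact: h1 | exact: h2].
Qed.


Lemma iruns_seq_elim n m l t (c : circ F n m) (d : circ F m l) sg :
  iruns t (Seq c d) sg -> exists v : int -> 'rV[F]_m,
    iruns t c (fun j => ((sg j).1, v j)) /\ iruns t d (fun j => (v j, (sg j).2)).
Proof.
move=> [st [s0 hs]].
have hk : forall k : nat, exists (c' : circ F n m) (d' : circ F m l), st (t + k%:Z) = Seq c' d'.
  elim => [|k [c' [d' e]]]; first by exists c, d; rewrite addr0.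
  have := hs (t + k%:Z) ltac:(lia). rewrite e => /seqinv [c2 [d2 [v [e2 _]]]].
  exists c2, d2. by have -> : t + (k.+1)%:Z = t + k%:Z + 1 by lia.
have hj : forall j, exists p : circ F n m * circ F m l, t <= j -> st j = Seq p.1 p.2.
  move=> j. case: (boolP (t <= j)) => h.
  - have [c' [d' e]] := hk `|j - t|%N. exists (c', d') => _. by rewrite absK in e.
  - by exists (c, d).
pose P j := proj1_sig (constructive_indefinite_description _ (hj j)).
have HP j : t <= j -> st j = Seq (P j).1 (P j).2 :=
  proj2_sig (constructive_indefinite_description _ (hj j)).
have hv : forall j, exists v : 'rV[F]_m, t <= j ->
    step j (P j).1 (sg j).1 v (P (j + 1)).1 /\ step j (P j).2 v (sg j).2 (P (j + 1)).2.
  move=> j. case: (boolP (t <= j)) => h; last by exists 0.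
  have := hs j h. rewrite (HP j h) (HP (j + 1) ltac:(lia)).
  move/seqinv => [c' [d' [v [e [h1 h2]]]]]. case/seqinj: e => -> ->. by exists v.
pose V j := proj1_sig (constructive_indefinite_description _ (hv j)).
have HV j : t <= j -> _ := proj2_sig (constructive_indefinite_description _ (hv j)).
have [e1 e2] : c = (P t).1 /\ d = (P t).2.
  apply: seqinj. by rewrite -s0 HP.
exists V. split.
- exists (fun j => (P j).1). split; first by rewrite -e1.
  move=> j h. exact: (proj1 (HV j h)).
- exists (fun j => (P j).2). split; first by rewrite -e2.
  move=> j h. exact: (proj2 (HV j h)).
Qed.

Lemma iruns_par_elim n1 m1 n2 m2 t (c : circ F n1 m1) (d : circ F n2 m2) sg :
  iruns t (Par c d) sg ->
    iruns t c (fun j => (lsubmx (sg j).1, lsubmx (sg j).2)) /\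
    iruns t d (fun j => (rsubmx (sg j).1, rsubmx (sg j).2)).
Proof.
move=> [st [s0 hs]].
have hk : forall k : nat, exists (c' : circ F n1 m1) (d' : circ F n2 m2), st (t + k%:Z) = Par c' d'.
  elim => [|k [c' [d' e]]]; first by exists c, d; rewrite addr0.
  have := parinv (hs (t + k%:Z) ltac:(lia)). rewrite e /=.
  move=> [c2 [d2 [u1 [u2 [w1 [w2 [e2 _]]]]]]].
  exists c2, d2. by have -> : t + (k.+1)%:Z = t + k%:Z + 1 by lia.
have hj : forall j, exists p : circ F n1 m1 * circ F n2 m2, t <= j -> st j = Par p.1 p.2.
  move=> j. case: (boolP (t <= j)) => h.
  - have [c' [d' e]] := hk `|j - t|%N. exists (c', d') => _. by rewrite absK in e.
  - by exists (c, d).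
pose P j := proj1_sig (constructive_indefinite_description _ (hj j)).
have HP j : t <= j -> st j = Par (P j).1 (P j).2 :=
  proj2_sig (constructive_indefinite_description _ (hj j)).
have hv : forall j, t <= j ->
    step j (P j).1 (lsubmx (sg j).1) (lsubmx (sg j).2) (P (j + 1)).1 /\
    step j (P j).2 (rsubmx (sg j).1) (rsubmx (sg j).2) (P (j + 1)).2.
  move=> j h.
  have := parinv (hs j h). rewrite (HP j h) (HP (j + 1) ltac:(lia)) /=.
  move=> [c' [d' [u1 [u2 [w1 [w2 [e [eu [ew [h1 h2]]]]]]]]]].
  case/parinj: e => -> ->. by rewrite eu ew !row_mxKl !row_mxKr.
have [e1 e2] : c = (P t).1 /\ d = (P t).2.
  apply: parinj. by rewrite -s0 HP.
split.
- exists (fun j => (P j).1). split; first by rewrite -e1.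
  move=> j h. exact: (proj1 (hv j h)).
- exists (fun j => (P j).2). split; first by rewrite -e2.
  move=> j h. exact: (proj2 (hv j h)).
Qed.

Definition tmin (a b : int) := if a <= b then a else b.
Lemma tminP (a b : int) : tmin a b <= a /\ tmin a b <= b.
Proof. rewrite /tmin; case: ifP; lia. Qed.

Lemma opsem_seq n m l (c : circ F n m) (d : circ F m l) :
  opsem (Seq c d) = tseq (opsem c) (opsem d).
Proof.
apply: functional_extensionality => sg; apply: propositional_extensionality; split.
- move/opsemE => [t [t0 [hz hr]]].
  have [v [h1 h2]] := iruns_seq_elim hr.
  pose s j := if j < t then (0, 0) else ((sg j).1, v j).
  pose r j := if j < t then (0, 0) else (v j, (sg j).2).
  exists s, r. split.
    apply/opsemE; exists t; split=> //; split; first by move=> j hj; rewrite /s hj.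
    apply: iruns_ext h1 => j hj. rewrite /s. have -> : (j < t) = false by lia. by [].
  split.
    apply/opsemE; exists t; split=> //; split; first by move=> j hj; rewrite /r hj.
    apply: iruns_ext h2 => j hj. rewrite /r. have -> : (j < t) = false by lia. by [].
  split; first by move=> i; rewrite /s /r; case: ifP.
  move=> i; rewrite /s /r; case: ifP => h; first by rewrite hz.
  by case: (sg i).
- case=> [s [r [hs [hr [hsr hsg]]]]].
  move/opsemE: hs => [t1 [t10 [hz1 hr1]]].
  move/opsemE: hr => [t2 [t20 [hz2 hr2]]].
  have [m1 m2] := tminP t1 t2.
  apply/opsemE. exists (tmin t1 t2). split; first by lia. split.
    move=> j hj. rewrite hsg hz1 ?hz2 //; lia.
  have := iruns_seq_intro (extend m1 t10 hz1 hr1) (extend m2 t20 hz2 hr2) hsr.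
  apply: iruns_ext => j _. by rewrite hsg.
Qed.

Lemma opsem_par n1 m1 n2 m2 (c : circ F n1 m1) (d : circ F n2 m2) :
  opsem (Par c d) = tpar (opsem c) (opsem d).
Proof.
apply: functional_extensionality => sg; apply: propositional_extensionality; split.
- move/opsemE => [t [t0 [hz hr]]].
  have [h1 h2] := iruns_par_elim hr.
  exists (fun j => (lsubmx (sg j).1, lsubmx (sg j).2)),
         (fun j => (rsubmx (sg j).1, rsubmx (sg j).2)).
  split.
    apply/opsemE; exists t; split=> //; split=> // j hj.
    by rewrite hz //= !lsub0.
  split.
    apply/opsemE; exists t; split=> //; split=> // j hj.
    by rewrite hz //= !rsub0.
  move=> i /=. rewrite !hsubmxK. by case: (sg i).
- case=> [s [r [hs [hr hsg]]]].
  move/opsemE: hs => [t1 [t10 [hz1 hr1]]].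
  move/opsemE: hr => [t2 [t20 [hz2 hr2]]].
  have [m1' m2'] := tminP t1 t2.
  apply/opsemE. exists (tmin t1 t2). split; first by lia. split.
    move=> j hj. rewrite hsg hz1 ?hz2 /= ?row_mx0 //; lia.
  have := iruns_par_intro (extend m1' t10 hz1 hr1) (extend m2' t20 hz2 hr2).
  apply: iruns_ext => j _. by rewrite hsg.
Qed.

Lemma zb_traj n m t (sg : trajfun F n m) : zb t sg -> is_traj sg.
Proof. move=> hz. exists (t - 1) => i hi. apply: hz. lia. Qed.

Lemma traj_zb n m (sg : trajfun F n m) : is_traj sg ->
  exists t, t <= 0 /\ zb t sg.
Proof.
move=> [j hj]. exists (tmin j 0). have [a b] := tminP j 0.
split=> // i hi. apply: hj. lia.
Qed.

Lemma const_states n m t (C : circ F n m) st sg :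
  (forall j u w C', step j C u w C' -> C' = C) ->
  st t = C -> (forall j, t <= j -> step j (st j) (sg j).1 (sg j).2 (st (j + 1))) ->
  forall j, t <= j -> st j = C.
Proof.
move=> hC s0 hs.
have hk : forall k : nat, st (t + k%:Z) = C.
  elim => [|k e]; first by rewrite addr0.
  have := hs (t + k%:Z) ltac:(lia). rewrite e => /hC.
  by have -> : t + (k.+1)%:Z = t + k%:Z + 1 by lia.
move=> j h. by rewrite -(absK h).
Qed.

Lemma opsem_id1 : opsem (Id1 F) = @tid F 1.
Proof.
apply: functional_extensionality => sg; apply: propositional_extensionality; split.
- move/opsemE => [t [t0 [hz [st [s0 hs]]]]].
  split; first exact: zb_traj hz.
  have hst := const_states (fun j u w C' (h : step j (Id1 F) u w C') => proj2 (simpinv h)) s0 hs.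
  move=> i. case: (boolP (i < t)) => h; first by rewrite hz.
  have hi : t <= i by lia.
  have := simpinv (hs i hi). by rewrite hst // => -[].
- move=> [ht e]. have [t [t0 hz]] := traj_zb ht.
  apply/opsemE. exists t; split=> //; split=> //.
  exists (fun _ => Id1 F); split=> // j _.
  rewrite -e [(sg j).1]rv1. exact: stId1.
Qed.

Lemma opsem_id0 : opsem (Id0 F) = @tid F 0.
Proof.
apply: functional_extensionality => sg; apply: propositional_extensionality; split.
- move/opsemE => [t [t0 [hz _]]].
  split; first exact: zb_traj hz.
  move=> i. by rewrite (rv0 (sg i).1) (rv0 (sg i).2).
- move=> [ht e]. have [t [t0 hz]] := traj_zb ht.
  apply/opsemE. exists t; split=> //; split=> //.
  exists (fun _ => Id0 F); split=> // j _.
  rewrite (rv0 (sg j).1) (rv0 (sg j).2). exact: stId0.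
Qed.

Lemma opsem_sw : opsem (Sw F) = @tsym F 1 1.
Proof.
apply: functional_extensionality => sg; apply: propositional_extensionality; split.
- move/opsemE => [t [t0 [hz [st [s0 hs]]]]].
  split; first exact: zb_traj hz.
  have hst := const_states (fun j u w C' (h : step j (Sw F) u w C') => proj2 (simpinv h)) s0 hs.
  move=> i. case: (boolP (i < t)) => h.
    by rewrite hz //= lsub0 rsub0 row_mx0.
  have hi : t <= i by lia.
  have := simpinv (hs i hi). rewrite hst // => -[[a [b [-> ->]]] _].
  by rewrite !v2E row_mxKl row_mxKr.
- move=> [ht e]. have [t [t0 hz]] := traj_zb ht.
  apply/opsemE. exists t; split=> //; split=> //.
  exists (fun _ => Sw F); split=> // j _.
  rewrite e. move: (sg j).1 => x.
  rewrite -[x](@hsubmxK F 1 1 1) row_mxKl row_mxKr.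
  rewrite [@lsubmx F 1 1 1 x]rv1 [@rsubmx F 1 1 1 x]rv1 -!v2E.
  exact: stSw.
Qed.

Lemma tpar_tid a b : tpar (@tid F a) (@tid F b) = @tid F (a + b).
Proof.
apply: functional_extensionality => s; apply: propositional_extensionality; split.
- case=> [s1 [s2 [[[j1 h1] e1] [[[j2 h2] e2] hs]]]].
  split.
    exists (tmin j1 j2) => i hi. have [m1 m2] := tminP j1 j2.
    by rewrite hs h1 ?h2 /= ?row_mx0 //; lia.
  move=> i. by rewrite hs /= e1 e2.
- move=> [[j hj] e].
  exists (fun i => (lsubmx (s i).1, lsubmx (s i).2)),
         (fun i => (rsubmx (s i).1, rsubmx (s i).2)).
  split.
    split; last by move=> i /=; rewrite e.
    exists j => i hi. by rewrite hj //= !lsub0.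
  split.
    split; last by move=> i /=; rewrite e.
    exists j => i hi. by rewrite hj //= !rsub0.
  move=> i /=. rewrite !hsubmxK. by case: (s i).
Qed.

Lemma opsem_cid n : opsem (cid F n) = @tid F n.
Proof.
elim: n => [|n IH]; first exact: opsem_id0.
change (opsem (Par (Id1 F) (cid F n)) = @tid F (1 + n)).
rewrite opsem_par IH opsem_id1. exact: tpar_tid.
Qed.

End Proof.

Theorem theorem1 (F : fieldType) :
  (forall (n m l : nat) (c : circ F n m) (d : circ F m l),
      opsem (Seq c d) = tseq (opsem c) (opsem d)) /\
  (forall (n1 m1 n2 m2 : nat) (c : circ F n1 m1) (d : circ F n2 m2),
      opsem (Par c d) = tpar (opsem c) (opsem d)) /\
  (forall n : nat, opsem (cid F n) = @tid F n) /\
  opsem (Id0 F) = @tid F 0 /\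
  opsem (Id1 F) = @tid F 1 /\
  opsem (Sw F) = @tsym F 1 1.
Proof.
split; first exact: opsem_seq.
split; first exact: opsem_par.
split; first exact: opsem_cid.
split; first exact: opsem_id0.
split; first exact: opsem_id1.
exact: opsem_sw.
Qed.
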